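(* Let $\lambda\ge1$ and let $f_\lambda$ be the number of free subgroups of index $6\lambda$ in $PSL_2(\mathbb Z)$. Then: (1) $f_\lambda\equiv-1\pmod 3$ if and only if the ternary expansion of $\lambda$ lies in $\{0,2\}^*1$; (2) $f_\lambda\equiv1\pmod 3$ if and only if the ternary expansion of $\lambda$ lies in $\{0,2\}^*10 0^*\cup\{0,2\}^*12 2^*$; (3) for all other $\lambda\ge1$, $f_\lambda\equiv0\pmod3$.
   Context: Equivalently, $F(z)=1+\sum_{\lambda\ge1}f_\lambda z^\lambda$ is the unique formal power series with $F(0)=1$ satisfying $zF^2(z)-(1-4z)F(z)+6z^2F'(z)+1=0$. Word notation: ternary expansions are written as strings of digits $0,1,2$ with the most significant digit on the left, and leading $0$'s may be added or removed at will; for a set $S$ of letters, $S^*$ is the set of all finite words over $S$; $a^*=\{\text{empty word},a,aa,\dots\}$; juxtaposition of sets of words denotes the set of concatenations. Thus e.g. $\{0,2\}^*100^*$ is the set of strings consisting of an arbitrary word in $0,2$, followed by $1$, followed by one or more $0$'s. *)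

(* Defs.v *)
From mathcomp Require Import all_boot all_order all_algebra.
Set Implicit Arguments. Unset Strict Implicit. Unset Printing Implicit Defensive.
Import GRing.Theory Num.Theory.
Local Open Scope ring_scope.

(* f : nat -> int is the coefficient sequence of a formal power series
   F(z) = \sum_n f n z^n with F(0)=1 satisfying
     z F^2 - (1 - 4z) F + 6 z^2 F' + 1 = 0,
   written coefficientwise:
   [z^0]     : -f 0 + 1 = 0
   [z^(n+1)] : \sum_(i<n+1) f i f (n-i) - f (n+1) + 4 f n + 6 n f n = 0. *)
Definition free_subgroup_series (f : nat -> int) : Prop :=
  f 0%N = 1 /\
  - f 0%N + 1 = 0 /\
  (forall n : nat,
     (\sum_(i < n.+1) f i * f (n - i)%N) - f n.+1 + 4 * f n
       + 6 * (n%:R * f n) = 0).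

Fixpoint ternary_aux (fuel n : nat) : seq nat :=
  match fuel with
  | 0 => [::]
  | fuel'.+1 => if n == 0%N then [::]
                else rcons (ternary_aux fuel' (n %/ 3)%N) (n %% 3)%N
  end.
Definition ternary (n : nat) : seq nat := ternary_aux n n.

Definition digits02 (w : seq nat) : bool := all (fun d => d \in [:: 0%N; 2%N]) w.

Definition lang_minus1 (s : seq nat) : Prop :=
  exists w, digits02 w /\ s = w ++ [:: 1%N].

Definition lang_plus1 (s : seq nat) : Prop :=
  exists w k, digits02 w /\
    (s = w ++ 1%N :: 0%N :: nseq k 0%N \/ s = w ++ 1%N :: 2%N :: nseq k 2%N).

(* Main.v *)
Require Import Defs.
From mathcomp Require Import all_boot all_order all_algebra.
From mathcomp Require Import zify ring.
Import GRing.Theory Num.Theory.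
Set Implicit Arguments. Unset Strict Implicit.
Lemma ternary_aux_stable fuel fuel' n : (n <= fuel)%N -> (n <= fuel')%N ->
  ternary_aux fuel n = ternary_aux fuel' n.
Proof.
elim: fuel fuel' n => [|fu IH] [|fu'] n //=.
- by rewrite leqn0 => /eqP ->.
- by rewrite leqn0 => _ /eqP ->.
move=> h1 h2; case: eqP => // hn.
rewrite (IH fu') //; lia.
Qed.

Lemma ternaryE n : (0 < n)%N -> ternary n = rcons (ternary (n %/ 3)) (n %% 3).
Proof.
case: n => [|n] // _; rewrite /ternary /=.
by rewrite (@ternary_aux_stable n (n.+1 %/ 3) (n.+1 %/ 3)) //; lia.
Qed.

Definition d (m : nat) : bool := digits02 (ternary m).

Lemma d0 : d 0 = true. Proof. by []. Qed.

Lemma d_rec a e : (e < 3)%N -> d (3 * a + e) = d a && (e \in [:: 0%N; 2%N]).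
Proof.
move=> he.
have [h0|hp] := posnP (3 * a + e).
  have -> : a = 0%N by lia.
  have -> : e = 0%N by lia.
  by [].
rewrite /d ternaryE //.
have -> : ((3 * a + e) %/ 3 = a)%N by lia.
have -> : ((3 * a + e) %% 3 = e)%N by lia.
by rewrite /digits02 all_rcons andbC.
Qed.

Lemma dtop k x : (x < 3 ^ k)%N -> d (3 ^ k + x) = false /\ d (2 * 3 ^ k + x) = d x.
Proof.
elim: k x => [|k IH] x hx.
  have -> : x = 0%N by rewrite expn0 in hx; lia.
  by [].
have hx' : (x %/ 3 < 3 ^ k)%N by rewrite expnS in hx; lia.
have [IH1 IH2] := IH _ hx'.
have E : x = (3 * (x %/ 3) + x %% 3)%N by lia.
have hm : (x %% 3 < 3)%N by lia.
split.
  have -> : (3 ^ k.+1 + x = 3 * (3 ^ k + x %/ 3) + x %% 3)%N by rewrite expnS; lia.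
  by rewrite d_rec // IH1.
have -> : (2 * 3 ^ k.+1 + x = 3 * (2 * 3 ^ k + x %/ 3) + x %% 3)%N by rewrite expnS; lia.
by rewrite d_rec // IH2 [in RHS]E d_rec.
Qed.

Lemma dE0 a : (1 <= a)%N -> d (3 * a).+1 = false /\ d (3 * a).-1 = d a.-1.
Proof.
move=> ha; split.
  by rewrite -addn1 d_rec //; case: (d a).
have -> : ((3 * a).-1 = 3 * a.-1 + 2)%N by lia.
by rewrite d_rec //; case: (d _).
Qed.

Lemma dE1 a : d (3 * a + 1).+1 = d a /\ d (3 * a + 1).-1 = d a.
Proof.
have -> : ((3 * a + 1).+1 = 3 * a + 2)%N by lia.
have -> : ((3 * a + 1).-1 = 3 * a + 0)%N by lia.
by rewrite !d_rec //; case: (d a).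
Qed.

Lemma dE2 a : d (3 * a + 2).+1 = d a.+1 /\ d (3 * a + 2).-1 = false.
Proof.
have -> : ((3 * a + 2).+1 = 3 * a.+1 + 0)%N by lia.
have -> : ((3 * a + 2).-1 = 3 * a + 1)%N by lia.
by rewrite !d_rec //; case: (d _); case: (d _).
Qed.

Lemma l_split l : (1 <= l)%N -> exists a e, (e < 3)%N /\ l = (3 * a + e)%N /\
   ternary l = rcons (ternary a) e.
Proof.
move=> hl; exists (l %/ 3)%N, (l %% 3)%N; split; first lia.
split; first lia.
exact: ternaryE.
Qed.

Lemma nseqS_r (n x : nat) : nseq n.+1 x = rcons (nseq n x) x.
Proof. by elim: n => //= n <-. Qed.

Lemma M_rcons t e : lang_minus1 (rcons t e) <-> e = 1%N /\ digits02 t.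
Proof.
split.
  case=> w [hw]; rewrite cats1 => /eqP; rewrite eqseq_rcons => /andP[/eqP -> /eqP ->].
  by split.
by case=> -> ht; exists t; rewrite cats1.
Qed.

Lemma M_nil : ~ lang_minus1 [::].
Proof. by case=> w [_] /(congr1 size); rewrite size_cat addn1. Qed.

Definition C (x : nat) (s : seq nat) : Prop :=
  exists w k, digits02 w /\ s = w ++ 1%N :: x :: nseq k x.

Lemma C_nil x : ~ C x [::].
Proof. by case=> w [k [_]] /(congr1 size); rewrite size_cat /= addnS. Qed.

Lemma C_rcons x t e : C x (rcons t e) <-> e = x /\ (lang_minus1 t \/ C x t).
Proof.
split.
  case=> w [[|k] [hw]].
    rewrite (_ : w ++ [:: 1%N; x] = rcons (w ++ [:: 1%N]) x); last by rewrite -cats1 -catA.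
    move/eqP; rewrite eqseq_rcons => /andP[/eqP -> /eqP ->].
    by split => //; left; exists w.
  rewrite nseqS_r -rcons_cons -rcons_cons -rcons_cat.
  move/eqP; rewrite eqseq_rcons => /andP[/eqP -> /eqP ->].
  by split => //; right; exists w, k.
case=> -> [[w [hw ->]]|[w [k [hw ->]]]].
  by exists w, 0%N; split => //; rewrite -cats1 -catA.
exists w, k.+1; split => //.
by rewrite nseqS_r -rcons_cons -rcons_cons -rcons_cat.
Qed.

Lemma M_iff l : (1 <= l)%N -> lang_minus1 (ternary l) <-> (d l.+1 && d l.-1).
Proof.
move=> hl; have [a [e [he [El ->]]]] := l_split hl; subst l.
rewrite M_rcons.
move: he hl; case: e => [|[|[|e]]] // _ hl.
- have ha : (1 <= a)%N by lia.
  rewrite addn0; have [-> _] := dE0 ha.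
  by split => // -[].
- have [-> ->] := dE1 a; rewrite andbb.
  by split; [case|split].
- have [_ ->] := dE2 a; rewrite andbF.
  by split => // -[].
Qed.

Lemma C0_iff l : (1 <= l)%N -> C 0 (ternary l) <-> (d l.-1 && ~~ d l.+1).
Proof.
elim: l {-2}l (leqnn l) => [|n IH] l hln hl; first lia.
have [a [e [he [El ->]]]] := l_split hl.
rewrite C_rcons.
move: he El; case: e => [|[|[|e]]] // _ El; subst l.
- have ha : (1 <= a)%N by lia.
  rewrite addn0; have [-> ->] := dE0 ha; rewrite andbT.
  rewrite M_iff // IH //; try lia.
- have [-> ->] := dE1 a; rewrite andbN.
  by split => // -[].
- have [_ ->] := dE2 a.
  by split => // -[].
Qed.

Lemma C2_iff l : (1 <= l)%N -> C 2 (ternary l) <-> (d l.+1 && ~~ d l.-1).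
Proof.
elim: l {-2}l (leqnn l) => [|n IH] l hln hl; first lia.
have [a [e [he [El ->]]]] := l_split hl.
rewrite C_rcons.
move: he El; case: e => [|[|[|e]]] // _ El; subst l.
- have ha : (1 <= a)%N by lia.
  rewrite addn0; have [-> _] := dE0 ha.
  by split => // -[].
- have [-> ->] := dE1 a; rewrite andbN.
  by split => // -[].
- have [-> ->] := dE2 a; rewrite andbT.
  case: (posnP a) => [a0|ha].
    subst a; split => //; case=> _ [/M_nil|/C_nil] //.
  rewrite M_iff // IH //; try lia.
Qed.

Lemma P_iff l : (1 <= l)%N -> lang_plus1 (ternary l) <->
   ((d l.+1 && ~~ d l.-1) || (d l.-1 && ~~ d l.+1)).
Proof.
move=> hl.
have E : lang_plus1 (ternary l) <-> C 0 (ternary l) \/ C 2 (ternary l).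
  split.
    by case=> w [k [hw [E|E]]]; [left|right]; exists w, k.
  by case=> [[w [k [hw E]]]|[w [k [hw E]]]]; exists w, k; split => //; [left|right].
rewrite E C0_iff // C2_iff //; lia.
Qed.
Local Open Scope ring_scope.
Notation K := 'F_3.
Lemma three0 : (3%:R : K) = 0. Proof. by apply/eqP. Qed.
Lemma intr_mod3 (x : int) : (x%:~R : K) = ((x %% 3)%Z)%:~R.
Proof.
rewrite {1}(divz_eq x 3) intrD intrM.
have -> : ((3:int)%:~R : K) = 0 by rewrite -three0.
by rewrite mulr0 add0r.
Qed.
Lemma mod3_cases (x : int) : exists2 n : nat, (x %% 3)%Z = n%:Z & (n < 3)%N.
Proof.
have h0 := modz_ge0 x (isT : (3:int) != 0).
have h1 := ltz_pmod x (isT : (0:int) < 3).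
case E: (x %% 3)%Z h0 h1 => [n|n] //= _ h1.
by exists n.
Qed.
Lemma modK (x y : int) : (x%:~R : K) = y%:~R <-> (x = y %[mod 3])%Z.
Proof.
rewrite intr_mod3 [RHS]intr_mod3.
have [n -> hn] := mod3_cases x; have [m -> hm] := mod3_cases y.
split; last by move=> ->.
move: n m hn hm => [|[|[|n]]] [|[|[|m]]] //= _ _ /eqP //.
Qed.
Lemma three0P : (3%:R : {poly K}) = 0. Proof. by rewrite -polyC_natr three0. Qed.

Fixpoint Rp (k : nat) : {poly K} :=
  match k with 0 => 1 | k'.+1 => Rp k' * (1 + 'X^(2 * 3 ^ k')) end.

Lemma cube (a b : {poly K}) : (a + b) ^+ 3 = a ^+ 3 + b ^+ 3.
Proof.
have -> : (a + b) ^+ 3 = a ^+ 3 + b ^+ 3 + 3%:R * (a * b * (a + b)) by ring.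
by rewrite three0P mul0r addr0.
Qed.

Lemma Rp_id k : Rp k ^+ 2 * (1 + 'X^2) = 1 + 'X^(2 * 3 ^ k).
Proof.
elim: k => [|k IH] /=; first by rewrite expr1n mul1r.
have -> : (Rp k * (1 + 'X^(2 * 3 ^ k))) ^+ 2 * (1 + 'X^2)
   = (Rp k ^+ 2 * (1 + 'X^2)) * (1 + 'X^(2 * 3 ^ k)) ^+ 2 by ring.
rewrite IH -exprS cube expr1n -exprM.
by rewrite expnS (mulnC 3) mulnA.
Qed.
Lemma coef_Rp k m : (Rp k)`_m = if (m < 3 ^ k)%N then (d m)%:R else 0.
Proof.
elim: k m => [|k IH] m /=.
  rewrite coefC expn0; case: m => [|m] //.
rewrite mulrDr mulr1 coefD coefMXn !IH.
set P := (3 ^ k)%N; have hP : (3 ^ k.+1 = 3 * P)%N by rewrite expnS.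
rewrite hP.
have [h1|h1] := ltnP m P.
  by rewrite ifT; [rewrite ifT; [rewrite addr0| lia] | lia].
rewrite add0r.
have [h2|h2] := ltnP m (2 * P).
  rewrite ifT; last lia.
  have := (@dtop k (m - P)%N); rewrite -/P => H.
  have [H1 _] := H ltac:(lia).
  have E : (P + (m - P) = m)%N by lia.
  by rewrite -E H1.
have [h3|h3] := ltnP m (3 * P).
  rewrite ifT; last lia.
  have := (@dtop k (m - 2 * P)%N); rewrite -/P => H.
  have [_ <-] := H ltac:(lia).
  by have -> : (2 * P + (m - 2 * P) = m)%N by lia.
by rewrite ifF //; lia.
Qed.

Section Series.
Variable k : nat.
Definition Qp : {poly K} := (1 + 'X^2) * Rp k.
Definition Yp : {poly K} := Qp - 1 + 'X.
Definition Fp : {poly K} := drop_poly 1 Yp.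

Lemma coef_Qp m : Qp`_m = (Rp k)`_m + (if (m < 2)%N then 0 else (Rp k)`_(m - 2)).
Proof. by rewrite /Qp mulrDl mul1r coefD mulrC coefMXn. Qed.

Lemma Yp0 : Yp`_0 = 0.
Proof. by rewrite /Yp coefD coefB coef_Qp coef_Rp expn_gt0 /= coefC coefX /=; apply/eqP. Qed.

Lemma YpE : Yp = Fp * 'X.
Proof.
apply/polyP => i; rewrite coefMX /Fp coef_drop_poly.
by case: i => [|i] //=; rewrite ?Yp0 // ?addn1 // Show.
Qed.

Lemma Qp_sq : Qp ^+ 2 = (1 + 'X^2) * (1 + 'X^(2 * 3 ^ k)).
Proof. by rewrite -Rp_id /Qp; ring. Qed.

Lemma key_id : 'X * (Fp ^+ 2 * 'X - (1 - 'X) * Fp + 1) = (1 + 'X^2) * 'X^(2 * 3 ^ k).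
Proof.
have E : 'X * (Fp ^+ 2 * 'X - (1 - 'X) * Fp + 1) =
   Qp ^+ 2 - (1 + 'X^2) + 3%:R * (1 - 'X + 'X^2 - Qp + Qp * 'X).
  have -> : Qp = Yp + 1 - 'X by rewrite /Yp; ring.
  rewrite YpE; ring.
by rewrite E three0P mul0r addr0 Qp_sq; ring.
Qed.

Lemma F_rec n : (n.+2 < 2 * 3 ^ k)%N -> Fp`_n.+1 = (Fp * Fp)`_n + Fp`_n.
Proof.
move=> hn.
have := congr1 (fun p : {poly K} => p`_n.+2) key_id.
rewrite /= mulrC coefMX /= mulrC coefMXn ifT //.
rewrite coefD coefB coefC /= (mulrC 'X) coefMX /= mulrBl mul1r coefB (mulrC 'X) coefMX /= expr2 addr0.
move/eqP; rewrite subr_eq0 => /eqP ->.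
by rewrite subrK.
Qed.
Lemma Fp0 : Fp`_0 = 1.
Proof.
rewrite /Fp coef_drop_poly /Yp coefD coefB coef_Qp !coef_Rp coefC coefX /=.
by case: ifP => _; apply/eqP.
Qed.

Lemma Fp_val l : (1 <= l)%N -> (l.+1 < 3 ^ k)%N ->
  Fp`_l = (d l.+1)%:R + (d l.-1)%:R.
Proof.
move=> h1 h2.
rewrite /Fp coef_drop_poly /Yp coefD coefB coef_Qp !coef_Rp coefC coefX addn1 /=.
rewrite h2 ifF; last lia.
rewrite ifT; last lia.
have -> : (l.+1 == 1)%N = false by lia.
have -> : (l.+1 - 2 = l.-1)%N by lia.
by rewrite subr0 addr0.
Qed.

Lemma fF (f : nat -> int) (hf : free_subgroup_series f) n :
  (n.+1 < 2 * 3 ^ k)%N -> (f n)%:~R = Fp`_n.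
Proof.
case: hf => hf0 [_ hrec].
elim: n {-2}n (leqnn n) => [|n IH] m hm hM.
  have -> : m = 0%N by lia.
  by rewrite hf0 Fp0.
have [hmn|hmn] := leqP m n; first exact: IH.
have Em : m = n.+1 by lia.
subst m.
rewrite F_rec //.
have E : f n.+1 = \sum_(i < n.+1) f i * f (n - i)%N + 4 * f n + 6 * (n%:R * f n).
  by have := hrec n; move/eqP; rewrite -addrA addrAC subr_eq0 addrA => /eqP <-.
rewrite E !intrD rmorph_sum !intrM coefM.
have -> : ((6:int)%:~R : K) = 0 by apply/eqP.
have -> : ((4:int)%:~R : K) = 1 by apply/eqP.
rewrite mul0r addr0 mul1r IH //; last lia.
congr (_ + _); apply: eq_bigr => i _.
have hi := ltn_ord i.
rewrite rmorphM /= !IH //; lia.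
Qed.
End Series.

Lemma key (f : nat -> int) (hf : free_subgroup_series f) (lam : nat) :
  (1 <= lam)%N -> (f lam)%:~R = (d lam.+1)%:R + (d lam.-1)%:R :> K.
Proof.
move=> hl.
have h3 : (lam.+1 < 3 ^ lam.+1)%N by apply: ltn_expl.
rewrite (@fF lam.+1 f hf) ?(Fp_val hl h3) //.
by apply: leq_trans h3 _; rewrite leq_pmull.
Qed.

Unset Implicit Arguments.

Theorem corollary17p5 (f : nat -> int) (hf : free_subgroup_series f)
  (lam : nat) (hlam : (1 <= lam)%N) :
  ((f lam = -1 %[mod 3])%Z <-> lang_minus1 (ternary lam)) /\
  ((f lam = 1 %[mod 3])%Z <-> lang_plus1 (ternary lam)) /\
  (~ lang_minus1 (ternary lam) -> ~ lang_plus1 (ternary lam) ->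
     (f lam = 0 %[mod 3])%Z).
Proof.
rewrite -!modK (key hf hlam) (M_iff hlam) (P_iff hlam).
case: (d lam.+1); case: (d lam.-1) => /=.
all: split; [|split]; try split; try (by move=> /eqP);
  try (by move=> _; apply/eqP); try (by move=> _ _; apply/eqP); by [].
Qed.
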